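(* For every $\alpha>0$, the function $$y\mapsto 1+2\sum_{k=1}^\infty e^{-\frac{\pi\alpha}{y}k^2}\cos\Big(2\pi k\big(\tfrac12-\tfrac1{8y^2}\big)\Big)$$ is monotonically decreasing on $[\sqrt3/2,\infty)$. *)

(* Defs.v *)
From Stdlib Require Import Reals.
From Coquelicot Require Import Coquelicot.
Open Scope R_scope.

Definition theta_term (alpha y : R) (k : nat) : R :=
  exp (- (PI * alpha / y) * (INR k) ^ 2)
  * cos (2 * PI * INR k * (1 / 2 - 1 / (8 * y ^ 2))).

(* f_alpha(y) = 1 + 2 * sum_{k>=1} theta_term alpha y k.
   Coquelicot's [Series a] is sum_{n>=0} a n, so we shift the index by one. *)
Definition theta_fun (alpha y : R) : R :=
  1 + 2 * Series (fun n : nat => theta_term alpha y (S n)).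

(* Main.v *)
Require Import Defs.
From Stdlib Require Import Reals Lra Lia Psatz ZArith.
From Coquelicot Require Import Coquelicot.
Open Scope R_scope.


Lemma exp_nat_mul (n : nat) (x : R) : exp (INR n * x) = exp x ^ n.
Proof.
  induction n as [|n IH].
  - simpl; rewrite Rmult_0_l; apply exp_0.
  - rewrite S_INR, Rmult_plus_distr_r, Rmult_1_l, exp_plus, IH; simpl; ring.
Qed.

Lemma pow_le_exp (m : nat) (x : R) : 0 <= x -> x ^ m <= INR (fact m) * exp x.
Proof.
  intros Hx.
  assert (H := exp_ge_taylor x m Hx).
  assert (Hs : x ^ m / INR (fact m) <= sum_f_R0 (fun k => x ^ k / INR (fact k)) m).
  { destruct m as [|m]. simpl; lra.
    rewrite tech5.
    assert (0 <= sum_f_R0 (fun k => x ^ k / INR (fact k)) m).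
    { apply cond_pos_sum. intro k. apply Rmult_le_pos. apply pow_le; lra.
      apply Rlt_le, Rinv_0_lt_compat, INR_fact_lt_0. }
    lra. }
  assert (Hf := INR_fact_lt_0 m).
  apply (Rmult_le_reg_r (/ INR (fact m))). apply Rinv_0_lt_compat; lra.
  replace (INR (fact m) * exp x * / INR (fact m)) with (exp x) by (field; lra).
  lra.
Qed.

Lemma mom_bound (a : R) (m k : nat) : 0 < a ->
  INR k ^ m * exp (- a * INR k ^ 2) <= INR (fact m) * (2 / a) ^ m * exp (- a / 2) ^ k.
Proof.
  intros Ha.
  assert (Hk : 0 <= INR k) by apply pos_INR.
  assert (H1 := pow_le_exp m (a / 2 * INR k) ltac:(apply Rmult_le_pos; lra)).
  rewrite Rpow_mult_distr in H1.
  assert (Hk2 : INR k <= INR k ^ 2).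
  { destruct k. simpl; lra. assert (1 <= INR (S k)) by (apply (le_INR 1); lia). nra. }
  assert (He : exp (- a * INR k ^ 2) <= exp (- a * INR k)).
  { destruct (Req_dec (INR k) (INR k ^ 2)) as [E|E]. rewrite <- E; lra.
    left; apply exp_increasing; nra. }
  rewrite <- exp_nat_mul.
  assert (Hpm : 0 < (a/2) ^ m) by (apply pow_lt; lra).
  assert (Hkm : INR k ^ m <= INR (fact m) * (2 / a) ^ m * exp (a / 2 * INR k)).
  { apply (Rmult_le_reg_l ((a/2)^m)); auto.
    replace ((a / 2) ^ m * (INR (fact m) * (2 / a) ^ m * exp (a / 2 * INR k)))
      with (INR (fact m) * exp (a / 2 * INR k) * ((a/2 * (2/a))^m)) by (rewrite Rpow_mult_distr; ring).
    replace (a/2 * (2/a)) with 1 by (field; lra). rewrite pow1. lra. }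
  assert (Hpos : 0 <= INR k ^ m) by (apply pow_le; auto).
  replace (INR k * (- a / 2)) with (- a * INR k + a / 2 * INR k) by field.
  rewrite exp_plus.
  assert (0 < exp (- a * INR k)) by apply exp_pos.
  assert (0 < exp (- a * INR k ^ 2)) by apply exp_pos.
  apply Rle_trans with (INR k ^ m * exp (- a * INR k)).
  apply Rmult_le_compat_l; auto.
  replace (INR (fact m) * (2 / a) ^ m * (exp (- a * INR k) * exp (a / 2 * INR k)))
    with (INR (fact m) * (2 / a) ^ m * exp (a / 2 * INR k) * exp (- a * INR k)) by ring.
  apply Rmult_le_compat_r; lra.
Qed.

Lemma ex_series_mom (a : R) (m : nat) (g : nat -> R) : 0 < a ->
  (forall n, Rabs (g n) <= 1) ->
  ex_series (fun n => INR (S n) ^ m * exp (- a * INR (S n) ^ 2) * g n).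
Proof.
  intros Ha Hg.
  apply (@ex_series_le R_AbsRing R_CompleteNormedModule _ (fun n => INR (fact m) * (2 / a) ^ m * exp (- a / 2) * exp (- a / 2) ^ n)).
  - intro n. change norm with Rabs. simpl norm.
    rewrite Rabs_mult.
    rewrite Rabs_right.
    2:{ apply Rle_ge, Rmult_le_pos. apply pow_le, pos_INR. left; apply exp_pos. }
    specialize (Hg n).
    assert (H := mom_bound a m (S n) Ha).
    assert (0 <= INR (S n) ^ m * exp (- a * INR (S n) ^ 2)).
    { apply Rmult_le_pos. apply pow_le, pos_INR. left; apply exp_pos. }
    change (exp (- a / 2) ^ S n) with (exp (- a / 2) * exp (- a / 2) ^ n) in H.
    assert (0 <= Rabs (g n)) by apply Rabs_pos.
    apply Rle_trans with (INR (S n) ^ m * exp (- a * INR (S n) ^ 2) * 1).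
    apply Rmult_le_compat_l; auto.
    rewrite Rmult_1_r. rewrite <- Rmult_assoc in H. exact H.
  - apply (@ex_series_scal_l R_AbsRing R_NormedModule).
    apply ex_series_geom. rewrite Rabs_right. 2: left; apply exp_pos.
    rewrite <- exp_0. apply exp_increasing; lra.
Qed.


Fixpoint fsum (f : nat -> R) (n : nat) : R :=
  match n with O => 0 | S n => fsum f n + f n end.

Lemma fsum_ext f g n : (forall j, (j < n)%nat -> f j = g j) -> fsum f n = fsum g n.
Proof. induction n; simpl; intros H; auto. rewrite IHn, H; auto. Qed.

Lemma fsum_plus f g n : fsum (fun j => f j + g j) n = fsum f n + fsum g n.
Proof. induction n; simpl; [ring| rewrite IHn; ring]. Qed.

Lemma fsum_scal c f n : fsum (fun j => c * f j) n = c * fsum f n.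
Proof. induction n; simpl; [ring| rewrite IHn; ring]. Qed.

Lemma fsum_front f n : fsum f (S n) = f O + fsum (fun j => f (S j)) n.
Proof. induction n; simpl in *; [ring| rewrite IHn; ring]. Qed.

Lemma fsum_pad f L d : (forall j, (L <= j)%nat -> f j = 0) -> fsum f (L + d) = fsum f L.
Proof. intros H; induction d. rewrite Nat.add_0_r; auto.
  rewrite Nat.add_succ_r; simpl. rewrite IHd, H by lia. ring. Qed.

Lemma fsum_shift (h : Z -> R) L :
  fsum (fun j => h (Z.of_nat j - 1)%Z) (S L) = h (-1)%Z + fsum (fun j => h (Z.of_nat j)) L.
Proof.
  rewrite fsum_front. f_equal. apply fsum_ext. intros j _. f_equal. lia.
Qed.

Lemma fsum_abs f n : Rabs (fsum f n) <= fsum (fun j => Rabs (f j)) n.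
Proof. induction n; simpl. rewrite Rabs_R0; lra.
  eapply Rle_trans. apply Rabs_triang. lra. Qed.

Lemma fsum_le f g n : (forall j, (j < n)%nat -> f j <= g j) -> fsum f n <= fsum g n.
Proof. induction n; simpl; intros H. lra. assert (f n <= g n) by (apply H; lia).
  assert (fsum f n <= fsum g n) by (apply IHn; intros; apply H; lia). lra. Qed.

Lemma fsum_const c n : fsum (fun _ => c) n = INR n * c.
Proof. induction n; simpl fsum. simpl; ring. rewrite IHn, S_INR; ring. Qed.

Section Coef.
Variable a : R.
Hypothesis Ha : 0 < a.

Definition pw (t : R) : R := exp (- 2 * a * t).

Fixpoint poch (n : nat) : R :=
  match n with O => 1 | S m => poch m * (1 - pw (INR (S m))) end.

Lemma pw_lt1 t : 0 < t -> pw t < 1.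
Proof. intros; unfold pw; rewrite <- exp_0; apply exp_increasing; nra. Qed.

Lemma pw_pos t : 0 < pw t.
Proof. apply exp_pos. Qed.

Lemma poch_pos n : 0 < poch n.
Proof. induction n; cbn [poch]. lra. apply Rmult_lt_0_compat; auto.
  assert (pw (INR (S n)) < 1) by (apply pw_lt1, lt_0_INR; lia). lra. Qed.

Definition invp (z : Z) : R :=
  match z with Zneg _ => 0 | _ => / poch (Z.to_nat z) end.

Lemma invp_neg z : (z < 0)%Z -> invp z = 0.
Proof. destruct z; simpl; auto; lia. Qed.

Lemma invp_nn z : (0 <= z)%Z -> invp z = / poch (Z.to_nat z).
Proof. destruct z; simpl; auto; lia. Qed.

Lemma invp_rec z : invp z = (1 - pw (IZR (z + 1))) * invp (z + 1).
Proof.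
  destruct (Z_lt_le_dec z (-1)) as [H|H].
  { rewrite !invp_neg by lia. ring. }
  destruct (Z.eq_dec z (-1)) as [E|E].
  { subst z. change (-1 + 1)%Z with 0%Z. change (invp (-1)) with 0. unfold pw. simpl IZR. replace (-2 * a * 0) with 0 by ring. rewrite exp_0. ring. }
  assert (Hz : (0 <= z)%Z) by lia.
  rewrite !invp_nn by lia.
  replace (Z.to_nat (z + 1)) with (S (Z.to_nat z)) by lia.
  replace (IZR (z + 1)) with (INR (S (Z.to_nat z))).
  2:{ rewrite INR_IZR_INZ. f_equal. lia. }
  cbn [poch].
  assert (Hp := poch_pos (Z.to_nat z)).
  assert (Hq : pw (INR (S (Z.to_nat z))) < 1) by (apply pw_lt1, lt_0_INR; lia).
  field. split; lra.
Qed.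

Definition coef (N : nat) (j : Z) : R :=
  poch (2 * N) * invp j * invp (2 * Z.of_nat N - j) * exp (- a * (IZR j - INR N) ^ 2).

Lemma coef_rec N j :
  let r := exp (- a * (2 * INR N + 1)) in
  coef (S N) j = (1 + r ^ 2) * coef N (j - 1) + r * coef N (j - 2) + r * coef N j.
Proof.
  intros r. unfold coef.
  set (X := invp j). set (Y := invp (2 * Z.of_nat (S N) - j)).
  set (u := pw (IZR j)). set (v := pw (2 * INR N + 2 - IZR j)).
  set (P' := exp (2 * a)).
  set (K := exp (- a * (IZR j - INR (S N)) ^ 2)).
  assert (h1 : invp (j - 1) = (1 - u) * X).
  { rewrite invp_rec. replace (j - 1 + 1)%Z with j by ring. reflexivity. }
  assert (h2 : invp (j - 2) = (1 - u * P') * ((1 - u) * X)).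
  { rewrite invp_rec. replace (j - 2 + 1)%Z with (j - 1)%Z by ring. rewrite h1.
    f_equal. f_equal. unfold u, P', pw. rewrite <- exp_plus. f_equal.
    rewrite minus_IZR. ring. }
  assert (h3 : invp (2 * Z.of_nat N - (j - 1)) = (1 - v) * Y).
  { rewrite invp_rec. unfold Y. replace (2 * Z.of_nat N - (j - 1) + 1)%Z with (2 * Z.of_nat (S N) - j)%Z by lia.
    f_equal. f_equal. unfold v. f_equal.
    rewrite minus_IZR, mult_IZR, <- INR_IZR_INZ, S_INR. simpl. ring. }
  assert (h4 : invp (2 * Z.of_nat N - j) = (1 - v * P') * ((1 - v) * Y)).
  { rewrite invp_rec. replace (2 * Z.of_nat N - j + 1)%Z with (2 * Z.of_nat N - (j - 1))%Z by lia.
    rewrite h3. f_equal. f_equal. unfold v, P', pw. rewrite <- exp_plus. f_equal.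
    rewrite ?plus_IZR, ?minus_IZR, ?mult_IZR, <- ?INR_IZR_INZ. simpl IZR. ring. }
  assert (h5 : invp (2 * Z.of_nat N - (j - 2)) = Y).
  { unfold Y. f_equal. lia. }
  assert (h6 : poch (2 * S N) = poch (2 * N) * (1 - u * v * P') * (1 - u * v)).
  { replace (2 * S N)%nat with (S (S (2 * N))) by lia. cbn [poch].
    replace (u * v * P') with (pw (INR (S (2 * N)))).
    replace (u * v) with (pw (INR (S (S (2 * N))))). ring.
    - unfold u, v, pw. rewrite <- exp_plus. f_equal. rewrite !S_INR, mult_INR. simpl. ring.
    - unfold u, v, P', pw. rewrite <- !exp_plus. f_equal. rewrite !S_INR, mult_INR. simpl. ring. }
  assert (e1 : exp (- a * (IZR (j - 1) - INR N) ^ 2) = K).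
  { unfold K. f_equal. rewrite minus_IZR, S_INR. ring. }
  assert (e2 : r * exp (- a * (IZR (j - 2) - INR N) ^ 2) = K * v).
  { unfold K, r, v, pw. rewrite <- !exp_plus. f_equal. rewrite minus_IZR, S_INR. ring. }
  assert (e3 : r * exp (- a * (IZR j - INR N) ^ 2) = K * u).
  { unfold K, r, u, pw. rewrite <- !exp_plus. f_equal. rewrite S_INR. ring. }
  assert (e4 : r ^ 2 = u * v * P').
  { unfold r, u, v, P', pw. rewrite <- !exp_plus. simpl. rewrite Rmult_1_r, <- exp_plus. f_equal. ring. }
  rewrite h1, h2, h3, h4, h5, h6, e1, e4.
  replace (r * (poch (2 * N) * ((1 - u * P') * ((1 - u) * X)) * Y * exp (- a * (IZR (j - 2) - INR N) ^ 2)))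
    with (poch (2 * N) * ((1 - u * P') * ((1 - u) * X)) * Y * (r * exp (- a * (IZR (j - 2) - INR N) ^ 2))) by ring.
  replace (r * (poch (2 * N) * X * ((1 - v * P') * ((1 - v) * Y)) * exp (- a * (IZR j - INR N) ^ 2)))
    with (poch (2 * N) * X * ((1 - v * P') * ((1 - v) * Y)) * (r * exp (- a * (IZR j - INR N) ^ 2))) by ring.
  rewrite e2, e3. ring.
Qed.



Lemma coef_neg N z : (z < 0)%Z -> coef N z = 0.
Proof. intros; unfold coef; rewrite (invp_neg z) by lia; ring. Qed.

Lemma coef_big N z : (2 * Z.of_nat N < z)%Z -> coef N z = 0.
Proof. intros; unfold coef; rewrite (invp_neg (2 * Z.of_nat N - z)) by lia; ring. Qed.

Fixpoint prodF (th : R) (N : nat) : R :=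
  match N with
  | O => 1
  | S M => prodF th M * (1 + 2 * exp (- a * (2 * INR M + 1)) * cos th + exp (- a * (2 * INR M + 1)) ^ 2)
  end.

Definition Ssum (N : nat) (th : R) : R :=
  fsum (fun j => coef N (Z.of_nat j) * cos ((IZR (Z.of_nat j) - INR N) * th)) (2 * N + 1).

Lemma prod_identity th N : prodF th N = Ssum N th.
Proof.
  induction N as [|N IH].
  { unfold Ssum. change (2*0+1)%nat with 1%nat. cbn [fsum prodF]. unfold coef.
    change (Z.of_nat 0) with 0%Z. change (2 * 0)%nat with 0%nat. change (2 * Z.of_nat 0 - 0)%Z with 0%Z.
    change (invp 0) with (/ poch 0). cbn [poch]. simpl INR. simpl IZR.
    replace ((0 - 0) * th) with 0 by ring. replace (- a * (0 - 0) ^ 2) with 0 by ring.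
    rewrite exp_0, cos_0. change (invp (2 * 0 - 0)) with (/ poch 0). cbn [poch]. field. }
  set (r := exp (- a * (2 * INR N + 1))).
  set (h1 := fun z : Z => coef N z * cos ((IZR z - INR N) * th)).
  set (h2 := fun z : Z => coef N z * cos ((IZR z - INR N + 1) * th)).
  set (h3 := fun z : Z => coef N z * cos ((IZR z - INR N - 1) * th)).
  assert (L1 : Ssum (S N) th = (1 + r ^ 2) * fsum (fun j => h1 (Z.of_nat j - 1)%Z) (S (2 * N + 2))
     + r * fsum (fun j => (fun z => h2 (z - 1)%Z) (Z.of_nat j - 1)%Z) (S (2 * N + 2))
     + r * fsum (fun j => h3 (Z.of_nat j)) (2 * N + 1 + 2)).
  { unfold Ssum.
    replace (2 * S N + 1)%nat with (S (2 * N + 2)) by lia.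
    replace (2 * N + 1 + 2)%nat with (S (2 * N + 2)) by lia.
    rewrite <- !fsum_scal, <- !fsum_plus.
    apply fsum_ext. intros j _. rewrite coef_rec. fold r. unfold h1, h2, h3.
    replace (Z.of_nat j - 1 - 1)%Z with (Z.of_nat j - 2)%Z by lia.
    rewrite !minus_IZR, S_INR. simpl IZR.
    replace ((IZR (Z.of_nat j) - 1 - INR N) * th) with ((IZR (Z.of_nat j) - (INR N + 1)) * th) by ring.
    replace ((IZR (Z.of_nat j) - 2 - INR N + 1) * th) with ((IZR (Z.of_nat j) - (INR N + 1)) * th) by ring.
    replace ((IZR (Z.of_nat j) - INR N - 1) * th) with ((IZR (Z.of_nat j) - (INR N + 1)) * th) by ring.
    ring. }
  rewrite L1, (fsum_shift h1), (fsum_shift (fun z => h2 (z - 1)%Z)).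
  replace (2 * N + 2)%nat with (S (2 * N + 1)) by lia.
  rewrite (fsum_shift h2).
  unfold h1 at 1, h2 at 1, h2 at 1.
  rewrite (coef_neg N (-1)) by lia. rewrite (coef_neg N (-1 - 1)) by lia.
  replace (S (2 * N + 1))%nat with (2 * N + 1 + 1)%nat by lia.
  rewrite (fsum_pad (fun j => h1 (Z.of_nat j)) (2*N+1) 1),
    (fsum_pad (fun j => h3 (Z.of_nat j)) (2*N+1) 2).
  2-3: intros j Hj; unfold h1, h2, h3; rewrite coef_big by lia; ring.
  simpl prodF. rewrite IH. fold r. unfold Ssum.
  rewrite Rmult_comm, <- fsum_scal.
  rewrite !Rmult_0_l, !Rplus_0_l. rewrite <- !fsum_scal, <- !fsum_plus.
  apply fsum_ext. intros j _. unfold h1, h2, h3.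
  set (x := (IZR (Z.of_nat j) - INR N)).
  replace ((x + 1) * th) with (x * th + th) by ring.
  replace ((x - 1) * th) with (x * th - th) by ring.
  rewrite cos_plus, cos_minus. ring.
Qed.
End Coef.


Definition Good (f : R -> R) : Prop :=
  (forall t, 0 <= f t) /\
  (forall x y, 0 <= x -> x <= y -> y <= PI -> f y <= f x) /\
  (forall x h, 0 <= h -> PI / 2 <= x - h -> x + h <= PI -> 2 * f x <= f (x + h) + f (x - h)).

Lemma Good_mult f g : Good f -> Good g -> Good (fun t => f t * g t).
Proof.
  intros [f0 [f1 f2]] [g0 [g1 g2]]. split; [|split].
  - intros t; apply Rmult_le_pos; auto.
  - intros x y Hx Hxy Hy. specialize (f1 x y Hx Hxy Hy). specialize (g1 x y Hx Hxy Hy).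
    assert (A := f0 y). assert (B := g0 y). assert (C := f0 x). assert (D := g0 x). nra.
  - intros x h Hh H1 H2.
    assert (PI / 2 > 0) by (assert (H := PI_RGT_0); lra).
    assert (Hm1 := f1 (x - h) (x + h) ltac:(lra) ltac:(lra) H2).
    assert (Hm2 := g1 (x - h) (x + h) ltac:(lra) ltac:(lra) H2).
    specialize (f2 x h Hh H1 H2). specialize (g2 x h Hh H1 H2).
    assert (A1 := f0 x). assert (A2 := g0 x). assert (A3 := f0 (x+h)). assert (A4 := g0 (x+h)).
    assert (A5 := f0 (x-h)). assert (A6 := g0 (x-h)).
    assert (4 * (f x * g x) <= (f (x + h) + f (x - h)) * (g (x + h) + g (x - h))).
    { assert (2 * f x * (2 * g x) <= (f (x + h) + f (x - h)) * (2 * g x)) by (apply Rmult_le_compat_r; lra).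
      assert ((f (x + h) + f (x - h)) * (2 * g x) <= (f (x + h) + f (x - h)) * (g (x + h) + g (x - h)))
        by (apply Rmult_le_compat_l; lra).
      lra. }
    nra.
Qed.

Lemma cos_decr x y : 0 <= x -> x <= y -> y <= PI -> cos y <= cos x.
Proof.
  intros. destruct (Req_dec x y). subst; lra.
  left; apply cos_decreasing_1; lra.
Qed.

Lemma Good_F r : 0 <= r -> Good (fun t => 1 + 2 * r * cos t + r ^ 2).
Proof.
  intros Hr. split; [|split].
  - intros t. cbv beta. assert (H := COS_bound t). assert (0 <= r * (1 + cos t)) by (apply Rmult_le_pos; lra). assert (0 <= (1 - r) * (1 - r)) by (apply Rle_0_sqr). lra.
  - intros x y Hx Hxy Hy. cbv beta. assert (H := cos_decr x y Hx Hxy Hy). nra.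
  - intros x h Hh H1 H2.
    cbv beta.
    rewrite cos_plus, cos_minus.
    assert (Hc : cos x <= 0) by (apply cos_le_0; lra).
    assert (Hb := COS_bound h).
    assert (0 <= (- cos x) * (1 - cos h)) by (apply Rmult_le_pos; lra).
    assert (0 <= r * ((- cos x) * (1 - cos h))) by (apply Rmult_le_pos; lra).
    lra.
Qed.

Section Lim.
Variable a : R.
Hypothesis Ha : 0 < a.

Lemma Good_prodF N : Good (fun t => prodF a t N).
Proof.
  induction N as [|N IH]; simpl.
  - split; [|split]; intros; lra.
  - apply (Good_mult (fun t => prodF a t N) (fun t => 1 + 2 * exp (- a * (2 * INR N + 1)) * cos t + exp (- a * (2 * INR N + 1)) ^ 2)); auto.
    apply Good_F. left; apply exp_pos.
Qed.

End Lim.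


Lemma exp_mono x y : x <= y -> exp x <= exp y.
Proof. intros. destruct (Req_dec x y). subst; lra. left; apply exp_increasing; lra. Qed.

Section W.
Variable a : R.
Hypothesis Ha : 0 < a.

Fixpoint Rp (m k : nat) : R :=
  match k with O => 1 | S k' => Rp m k' * (1 - pw a (INR (m + S k'))) end.

Lemma pw_decr s t : s <= t -> pw a t <= pw a s.
Proof. intros; unfold pw. destruct (Req_dec s t). subst; lra. left; apply exp_increasing; nra. Qed.

Lemma pw_nat_lt1 n : pw a (INR (S n)) < 1.
Proof. apply pw_lt1; auto. apply lt_0_INR; lia. Qed.

Lemma poch_add m k : poch a (m + k) = poch a m * Rp m k.
Proof.
  induction k as [|k IH]. simpl. rewrite Nat.add_0_r; ring.
  rewrite Nat.add_succ_r. cbn [poch Rp]. rewrite IH. rewrite <- Nat.add_succ_r. ring.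
Qed.

Lemma Rp_pos m k : 0 < Rp m k.
Proof. induction k; cbn [Rp]. lra. apply Rmult_lt_0_compat; auto.
  rewrite Nat.add_succ_r. assert (H := pw_nat_lt1 (m + k)). lra. Qed.

Lemma Rp_le1 m k : Rp m k <= 1.
Proof. induction k; cbn [Rp]. lra. assert (H := Rp_pos m k).
  assert (H2 := pw_pos a (INR (m + S k))).
  rewrite Nat.add_succ_r in *. assert (H3 := pw_nat_lt1 (m + k)).
  apply Rle_trans with (Rp m k * 1). apply Rmult_le_compat_l; lra. lra. Qed.

Lemma Rp_mono m n k : (m <= n)%nat -> Rp m k <= Rp n k.
Proof.
  intros Hmn. induction k; cbn [Rp]. lra.
  assert (H1 := Rp_pos m k). assert (H2 := Rp_pos n k).
  assert (pw a (INR (n + S k)) <= pw a (INR (m + S k))) by (apply pw_decr, le_INR; lia).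
  assert (pw a (INR (m + S k)) < 1) by (rewrite Nat.add_succ_r; apply pw_nat_lt1).
  apply Rle_trans with (Rp n k * (1 - pw a (INR (m + S k)))).
  apply Rmult_le_compat_r; lra. apply Rmult_le_compat_l; lra.
Qed.

Lemma Rp_lb m k : 1 - INR k * pw a (INR (m + 1)) <= Rp m k.
Proof.
  induction k as [|k IH]; cbn [Rp]. simpl; lra.
  set (x := pw a (INR (m + 1))). set (y := pw a (INR (m + S k))).
  assert (Hy : y <= x) by (apply pw_decr, le_INR; lia).
  assert (Hy0 : 0 < y) by apply pw_pos. assert (Hx0 : 0 < x) by apply pw_pos.
  assert (Hy1 : y < 1) by (unfold y; rewrite <- Nat.add_succ_comm; apply pw_nat_lt1).
  assert (Hk : 0 <= INR k) by apply pos_INR.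
  rewrite S_INR.
  assert (Rp m k * (1 - y) >= (1 - INR k * x) * (1 - y)). apply Rle_ge, Rmult_le_compat_r. lra. exact IH.
  assert (0 <= INR k * x * y) by (apply Rmult_le_pos; [apply Rmult_le_pos|]; lra).
  lra.
Qed.

Lemma w_bound N k : (k <= N)%nat ->
  Rabs (poch a N * poch a N / (poch a (N - k) * poch a (N + k)) - 1) * exp (- a * INR k ^ 2)
  <= INR N * exp (- a * (2 * INR N + 1)).
Proof.
  intros Hk. set (M := (N - k)%nat).
  assert (HN : N = (M + k)%nat) by (unfold M; lia).
  assert (E1 : poch a N = poch a M * Rp M k) by (rewrite HN at 1; apply poch_add).
  assert (E2 : poch a (N + k) = poch a N * Rp N k) by apply poch_add.
  assert (HpM := poch_pos a Ha M). assert (HpN := poch_pos a Ha N).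
  assert (R1 := Rp_pos M k). assert (R2 := Rp_pos N k).
  assert (Hr : poch a N * poch a N / (poch a M * poch a (N + k)) = Rp M k / Rp N k).
  { rewrite E2. rewrite E1 at 1. field. repeat split; lra. }
  rewrite Hr.
  assert (Hle : Rp M k / Rp N k <= 1).
  { apply (Rmult_le_reg_r (Rp N k)); auto. unfold Rdiv. rewrite Rmult_assoc, Rinv_l by lra.
    rewrite Rmult_1_r, Rmult_1_l. apply Rp_mono; lia. }
  assert (Hge : Rp M k <= Rp M k / Rp N k).
  { apply (Rmult_le_reg_r (Rp N k)); auto. unfold Rdiv. rewrite Rmult_assoc, Rinv_l by lra.
    rewrite Rmult_1_r. assert (H := Rp_le1 N k).
    apply Rle_trans with (Rp M k * 1). apply Rmult_le_compat_l; lra. lra. }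
  assert (Hlb := Rp_lb M k).
  assert (Habs : Rabs (Rp M k / Rp N k - 1) <= INR k * pw a (INR (M + 1))).
  { rewrite Rabs_left1 by lra. lra. }
  assert (He := exp_pos (- a * INR k ^ 2)).
  apply Rle_trans with (INR k * pw a (INR (M + 1)) * exp (- a * INR k ^ 2)).
  apply Rmult_le_compat_r; lra.
  unfold pw. rewrite Rmult_assoc, <- exp_plus.
  assert (Hk' : INR k <= INR N) by (apply le_INR; lia).
  assert (HkN : INR N = INR M + INR k) by (rewrite HN, plus_INR; ring).
  assert (Hex : exp (-2 * a * INR (M + 1) + - a * INR k ^ 2) <= exp (- a * (2 * INR N + 1))).
  { apply exp_mono. rewrite plus_INR. simpl (INR 1). rewrite HkN.
    assert (0 <= a * ((INR k - 1) * (INR k - 1))) by (apply Rmult_le_pos; [lra| apply Rle_0_sqr]).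
    lra. }
  assert (0 <= INR k) by apply pos_INR.
  apply Rle_trans with (INR k * exp (- a * (2 * INR N + 1))).
  apply Rmult_le_compat_l; auto.
  apply Rmult_le_compat_r; auto. left; apply exp_pos.
Qed.

End W.


Lemma pairing (h : R -> R) (Hh : forall t, h (- t) = h t) N :
  fsum (fun j => h (INR j - INR N)) (2 * N + 1) = h 0 + 2 * fsum (fun n => h (INR (S n))) N.
Proof.
  induction N as [|N IH].
  { simpl. rewrite Rminus_0_r. ring. }
  replace (2 * S N + 1)%nat with (S (S (2 * N + 1))) by lia.
  rewrite fsum_front. cbn [fsum].
  rewrite (fsum_ext (fun j => h (INR (S j) - INR (S N))) (fun j => h (INR j - INR N))).
  2:{ intros j _. f_equal. rewrite !S_INR. ring. }
  rewrite IH.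
  replace (INR 0 - INR (S N)) with (- INR (S N)) by (simpl; ring). rewrite Hh.
  replace (INR (S (2 * N + 1)) - INR (S N)) with (INR (S N)).
  2:{ rewrite !S_INR, plus_INR, mult_INR. simpl. ring. }
  ring.
Qed.

Lemma fsum_minus f g n : fsum (fun j => f j - g j) n = fsum f n - fsum g n.
Proof. induction n; simpl; [ring| rewrite IHn; ring]. Qed.

Section L.
Variable a : R.
Hypothesis Ha : 0 < a.

Definition tterm (th : R) (n : nat) : R := exp (- a * INR (S n) ^ 2) * cos (INR (S n) * th).
Definition tA (th : R) : R := 1 + 2 * Series (tterm th).
Definition Apart (th : R) (N : nat) : R := 1 + 2 * fsum (tterm th) N.
Definition U (th : R) (N : nat) : R := Ssum a N th / coef a N (Z.of_nat N).

Lemma ex_series_tterm th : ex_series (tterm th).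
Proof.
  assert (H := ex_series_mom a 0 (fun n => cos (INR (S n) * th)) Ha (fun n => ltac:(apply Rabs_le, COS_bound))).
  eapply ex_series_ext; [|exact H]. intro n. unfold tterm. simpl. ring.
Qed.

Lemma fsum_sum_n f N : fsum f (S N) = sum_n f N.
Proof.
  induction N. simpl. rewrite sum_O. ring.
  rewrite sum_Sn. cbn [fsum] in *. rewrite IHN. reflexivity.
Qed.

Lemma Apart_lim th : is_lim_seq (Apart th) (tA th).
Proof.
  unfold Apart, tA.
  apply is_lim_seq_plus'. apply is_lim_seq_const.
  apply (is_lim_seq_scal_l _ 2 (Series (tterm th))).
  apply is_lim_seq_incr_1.
  eapply is_lim_seq_ext. intro n. symmetry. apply fsum_sum_n.
  apply (Series_correct _ (ex_series_tterm th)).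
Qed.

Lemma coef_ratio N j : (j <= 2 * N)%nat ->
  coef a N (Z.of_nat j) / coef a N (Z.of_nat N) =
  poch a N * poch a N / (poch a j * poch a (2 * N - j)) * exp (- a * (INR j - INR N) ^ 2).
Proof.
  intros Hj. unfold coef.
  rewrite !invp_nn by lia.
  rewrite Nat2Z.id.
  replace (Z.to_nat (2 * Z.of_nat N - Z.of_nat j)) with (2 * N - j)%nat by lia.
  replace (Z.to_nat (2 * Z.of_nat N - Z.of_nat N)) with N by lia.
  rewrite <- !INR_IZR_INZ. rewrite Rminus_diag. replace (- a * 0 ^ 2) with 0 by ring. rewrite exp_0.
  assert (H1 := poch_pos a Ha N). assert (H2 := poch_pos a Ha j). assert (H3 := poch_pos a Ha (2 * N - j)).
  assert (H4 := poch_pos a Ha (2 * N)).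
  rewrite Nat2Z.id. field. repeat split; lra.
Qed.

Lemma U_bound th N : Rabs (U th N - Apart th N) <= INR (2 * N + 1) * (INR N * exp (- a * (2 * INR N + 1))).
Proof.
  set (h := fun t => exp (- a * t ^ 2) * cos (t * th)).
  assert (EA : Apart th N = fsum (fun j => h (INR j - INR N)) (2 * N + 1)).
  { rewrite pairing. unfold h, Apart, tterm.
    rewrite Rmult_0_l, cos_0. replace (- a * 0 ^ 2) with 0 by ring. rewrite exp_0, Rmult_1_r. reflexivity.
    intro t. unfold h. replace ((- t) ^ 2) with (t ^ 2) by ring.
    replace (- t * th) with (- (t * th)) by ring. rewrite cos_neg. reflexivity. }
  assert (Hc : 0 < coef a N (Z.of_nat N)).
  { unfold coef. rewrite !invp_nn by lia. apply Rmult_lt_0_compat. 2: apply exp_pos.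
    repeat apply Rmult_lt_0_compat; try apply Rinv_0_lt_compat; apply poch_pos; auto. }
  assert (EU : U th N = fsum (fun j => coef a N (Z.of_nat j) / coef a N (Z.of_nat N) * cos ((INR j - INR N) * th)) (2 * N + 1)).
  { unfold U, Ssum, Rdiv. rewrite Rmult_comm, <- fsum_scal. apply fsum_ext. intros j _.
    rewrite <- INR_IZR_INZ. ring. }
  rewrite EA, EU.
  replace (fsum (fun j => coef a N (Z.of_nat j) / coef a N (Z.of_nat N) * cos ((INR j - INR N) * th)) (2 * N + 1)
     - fsum (fun j => h (INR j - INR N)) (2 * N + 1))
   with (fsum (fun j => (coef a N (Z.of_nat j) / coef a N (Z.of_nat N) - exp (- a * (INR j - INR N) ^ 2)) * cos ((INR j - INR N) * th)) (2 * N + 1)).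
  2:{ rewrite <- fsum_minus. apply fsum_ext. intros j _. unfold h. ring. }
  eapply Rle_trans. apply fsum_abs.
  rewrite <- fsum_const. apply fsum_le. intros j Hj.
  rewrite Rabs_mult. assert (Hcos := Rabs_le _ _ (COS_bound ((INR j - INR N) * th))).
  rewrite coef_ratio by lia.
  replace (poch a N * poch a N / (poch a j * poch a (2 * N - j)) * exp (- a * (INR j - INR N) ^ 2) -
     exp (- a * (INR j - INR N) ^ 2)) with
     ((poch a N * poch a N / (poch a j * poch a (2 * N - j)) - 1) * exp (- a * (INR j - INR N) ^ 2)) by ring.
  rewrite Rabs_mult, (Rabs_right (exp _)) by (left; apply exp_pos).
  assert (Hw : Rabs (poch a N * poch a N / (poch a j * poch a (2 * N - j)) - 1) * exp (- a * (INR j - INR N) ^ 2)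
               <= INR N * exp (- a * (2 * INR N + 1))).
  { destruct (le_lt_dec j N) as [HjN|HjN].
    - assert (Hw := w_bound a Ha N (N - j) ltac:(lia)).
      replace (N - (N - j))%nat with j in Hw by lia.
      replace (N + (N - j))%nat with (2 * N - j)%nat in Hw by lia.
      replace ((INR j - INR N) ^ 2) with (INR (N - j) ^ 2). exact Hw.
      rewrite minus_INR by lia. ring.
    - assert (Hw := w_bound a Ha N (j - N) ltac:(lia)).
      replace (N - (j - N))%nat with (2 * N - j)%nat in Hw by lia.
      replace (N + (j - N))%nat with j in Hw by lia.
      replace ((INR j - INR N) ^ 2) with (INR (j - N) ^ 2). 2: rewrite minus_INR by lia; ring.
      rewrite (Rmult_comm (poch a j)). exact Hw. }
  assert (0 <= Rabs (poch a N * poch a N / (poch a j * poch a (2 * N - j)) - 1) * exp (- a * (INR j - INR N) ^ 2)).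
  { apply Rmult_le_pos. apply Rabs_pos. left; apply exp_pos. }
  assert (0 <= Rabs (cos ((INR j - INR N) * th))) by apply Rabs_pos.
  apply Rle_trans with (Rabs (poch a N * poch a N / (poch a j * poch a (2 * N - j)) - 1) * exp (- a * (INR j - INR N) ^ 2) * 1).
  apply Rmult_le_compat_l; auto. lra.
Qed.

End L.


Lemma inv_n_lim c : is_lim_seq (fun N => c / (INR N + 1)) 0.
Proof.
  replace 0 with (c * 0) by ring.
  apply (is_lim_seq_scal_l (fun N => / (INR N + 1)) c 0).
  replace (Finite 0) with (Rbar_inv p_infty) by reflexivity.
  apply is_lim_seq_inv. 2: discriminate.
  eapply is_lim_seq_ext. intro n. apply S_INR.
  apply -> is_lim_seq_incr_1. apply is_lim_seq_INR.
Qed.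

Section M.
Variable a : R.
Hypothesis Ha : 0 < a.

Lemma bN_bound N : INR (2 * N + 1) * (INR N * exp (- a * (2 * INR N + 1))) <= 6 / (a ^ 3) / (INR N + 1).
Proof.
  set (m := INR (2 * N + 1)).
  assert (Hm : m = 2 * INR N + 1) by (unfold m; rewrite plus_INR, mult_INR; simpl; ring).
  rewrite <- Hm.
  assert (HN : 0 <= INR N) by apply pos_INR.
  assert (Hm0 : 0 < m) by lra.
  assert (H3 := pow_le_exp 3 (a * m) ltac:(apply Rmult_le_pos; lra)).
  simpl (INR (fact 3)) in H3.
  set (E := exp (- a * m)). assert (HE : E * exp (a * m) = 1).
  { unfold E; rewrite <- exp_plus. replace (- a * m + a * m) with 0 by ring. apply exp_0. }
  assert (HE0 : 0 < E) by apply exp_pos.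
  assert (He : 0 < exp (a * m)) by apply exp_pos.
  assert (Hb : m * m * E <= 6 / (a ^ 3 * m)).
  { apply (Rmult_le_reg_r (a ^ 3 * m * exp (a * m))).
    apply Rmult_lt_0_compat; [apply Rmult_lt_0_compat; [apply pow_lt; lra| lra]| lra].
    replace (m * m * E * (a ^ 3 * m * exp (a * m))) with ((a * m) ^ 3 * (E * exp (a * m))) by ring.
    rewrite HE. replace (6 / (a ^ 3 * m) * (a ^ 3 * m * exp (a * m))) with (6 * exp (a * m)).
    lra. field. repeat split; lra. }
  assert (Hb2 : m * (INR N * E) <= m * m * E).
  { rewrite <- Rmult_assoc. apply Rmult_le_compat_r; [lra|]. apply Rmult_le_compat_l; lra. }
  assert (Ha3 : 0 < a ^ 3) by (apply pow_lt; lra).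
  assert (Hb3 : 6 / (a ^ 3 * m) <= 6 / a ^ 3 / (INR N + 1)).
  { unfold Rdiv. rewrite Rinv_mult. rewrite Rmult_assoc. apply Rmult_le_compat_l. lra.
    apply Rmult_le_compat_l. left; apply Rinv_0_lt_compat; lra.
    apply Rinv_le_contravar; lra. }
  unfold E in *. lra.
Qed.

Lemma U_lim th : is_lim_seq (U a th) (tA a th).
Proof.
  replace (tA a th) with (tA a th + 0) by ring.
  eapply is_lim_seq_ext.
  intro N. instantiate (1 := fun N => Apart a th N + (U a th N - Apart a th N)). simpl. ring.
  apply is_lim_seq_plus'. apply Apart_lim; auto.
  apply (is_lim_seq_le_le (fun N => - (6 / (a ^ 3) / (INR N + 1))) _ (fun N => 6 / (a ^ 3) / (INR N + 1))).
  - intro N. assert (H1 := U_bound a Ha th N). assert (H2 := bN_bound N).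
    apply Rabs_le_between. lra.
  - eapply is_lim_seq_ext. intro N. instantiate (1 := fun N => (- (6 / a ^ 3)) / (INR N + 1)). simpl. field.
    assert (0 <= INR N) by apply pos_INR. lra. apply inv_n_lim.
  - apply inv_n_lim.
Qed.

Lemma U_prod th N : U a th N = prodF a th N / coef a N (Z.of_nat N).
Proof. unfold U. rewrite prod_identity; auto. Qed.

Lemma cNN_pos N : 0 < coef a N (Z.of_nat N).
Proof.
  unfold coef. rewrite !invp_nn by lia. apply Rmult_lt_0_compat. 2: apply exp_pos.
  repeat apply Rmult_lt_0_compat; try apply Rinv_0_lt_compat; apply poch_pos; auto.
Qed.

Lemma tA_decr x y : 0 <= x -> x <= y -> y <= PI -> tA a y <= tA a x.
Proof.
  intros H1 H2 H3.
  cut (Rbar_le (tA a y) (tA a x)). simpl; auto.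
  apply (is_lim_seq_le (U a y) (U a x)); [| apply U_lim| apply U_lim].
  intro N. rewrite !U_prod. unfold Rdiv. apply Rmult_le_compat_r.
  left; apply Rinv_0_lt_compat, cNN_pos.
  destruct (Good_prodF a N) as [_ [G _]]. apply G; auto.
Qed.

Lemma tA_mid x h : 0 <= h -> PI / 2 <= x - h -> x + h <= PI ->
  2 * tA a x <= tA a (x + h) + tA a (x - h).
Proof.
  intros H1 H2 H3.
  assert (L1 := is_lim_seq_scal_l _ 2 _ (U_lim x)).
  assert (L2 := is_lim_seq_plus' _ _ _ _ (U_lim (x + h)) (U_lim (x - h))).
  cut (Rbar_le (Rbar_mult 2 (tA a x)) (tA a (x + h) + tA a (x - h))). simpl; auto.
  apply (is_lim_seq_le (fun n => 2 * U a x n) (fun n => U a (x + h) n + U a (x - h) n)); [| exact L1| exact L2].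
  intro N. rewrite !U_prod.
  assert (Hc := cNN_pos N).
  destruct (Good_prodF a N) as [_ [_ G]]. specialize (G x h H1 H2 H3). cbv beta in G.
  unfold Rdiv. rewrite <- Rmult_plus_distr_r, <- Rmult_assoc.
  apply Rmult_le_compat_r. left; apply Rinv_0_lt_compat; auto. exact G.
Qed.

End M.


Lemma R_bound u : Rabs (cos u - 1 + u ^ 2 / 2) <= u ^ 4.
Proof.
  destruct (Rle_lt_dec (Rabs u) 2) as [H|H].
  - apply Rabs_le_between in H.
    assert (B := pre_cos_bound u 0 ltac:(lra) ltac:(lra)).
    replace (2 * 0 + 1)%nat with 1%nat in B by lia. replace (2 * (0 + 1))%nat with 2%nat in B by lia.
    unfold cos_approx, cos_term in B. simpl in B.
    assert (E1 : 1 - u ^ 2 / 2 <= cos u) by (replace (1 - u ^ 2 / 2) with (1 / 1 * 1 + -1 / (1 + 1) * (u * u)) by field; lra).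
    assert (E2 : cos u <= 1 - u ^ 2 / 2 + u ^ 4 / 24).
    { eapply Rle_trans. apply B. right. field. }
    assert (0 <= u ^ 4) by (replace (u ^ 4) with ((u ^ 2) ^ 2) by ring; apply pow2_ge_0).
    apply Rabs_le. lra.
  - assert (Hc := COS_bound u).
    assert (H4 : 4 < u ^ 2).
    { unfold Rabs in H; destruct (Rcase_abs u); nra. }
    assert (u ^ 4 = u ^ 2 * u ^ 2) by ring.
    apply Rabs_le. nra.
Qed.

Lemma exs_dom (f g : nat -> R) : (forall n, Rabs (f n) <= g n) -> ex_series g -> ex_series f.
Proof. intros H Hg. apply (@ex_series_le R_AbsRing R_CompleteNormedModule f g); auto. Qed.

Lemma exs_plus (f g : nat -> R) : ex_series f -> ex_series g -> ex_series (fun n => f n + g n).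
Proof. intros; apply (@ex_series_plus R_AbsRing R_NormedModule); auto. Qed.

Lemma exs_scal (c : R) (f : nat -> R) : ex_series f -> ex_series (fun n => c * f n).
Proof. intros; apply (@ex_series_scal_l R_AbsRing R_NormedModule); auto. Qed.

Section D.
Variable a : R.
Hypothesis Ha : 0 < a.

Definition kk (n : nat) := INR (S n).
Definition Dser (th : R) := Series (fun n => kk n ^ 2 * exp (- a * kk n ^ 2) * cos (kk n * th)).
Definition M4 := Series (fun n => kk n ^ 4 * exp (- a * kk n ^ 2) * 1).

Lemma ex_mom m g : (forall n, Rabs (g n) <= 1) -> ex_series (fun n => kk n ^ m * exp (- a * kk n ^ 2) * g n).
Proof. intros; apply ex_series_mom; auto. Qed.

Lemma M4_nonneg : 0 <= M4.
Proof.
  unfold M4. assert (H := Series_le (fun _ => 0) (fun n => kk n ^ 4 * exp (- a * kk n ^ 2) * 1)).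
  assert (Z : Series (fun _ : nat => 0) = 0).
  { rewrite (Series_ext _ (fun n => 0 * 0)) by (intro; ring). rewrite Series_scal_l. ring. }
  rewrite Z in H. apply H. 2: apply ex_mom; intros; rewrite Rabs_R1; lra.
  intro n. split. lra. rewrite Rmult_1_r. apply Rmult_le_pos. apply pow_le, pos_INR. left; apply exp_pos.
Qed.

Lemma Dser_key th h : 0 < h -> PI / 2 <= th - h -> th + h <= PI -> Dser th <= 2 * h ^ 2 * M4.
Proof.
  intros Hh H1 H2.
  assert (Mid := tA_mid a Ha th h ltac:(lra) H1 H2).
  unfold tA in Mid.
  set (c := fun n => cos (kk n * th)).
  set (e := fun n => exp (- a * kk n ^ 2)).
  set (Rr := fun n => cos (kk n * h) - 1 + (kk n * h) ^ 2 / 2).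
  assert (Ex1 : ex_series (fun n => kk n ^ 2 * e n * c n)) by (apply ex_mom; intro; apply Rabs_le, COS_bound).
  assert (HR : forall n, Rabs (e n * c n * Rr n) <= h ^ 4 * (kk n ^ 4 * e n * 1)).
  { intro n.
    assert (He : 0 < e n) by (unfold e; apply exp_pos).
    assert (Hc : Rabs (c n) <= 1) by (unfold c; apply Rabs_le, COS_bound).
    assert (B : Rabs (Rr n) <= (kk n * h) ^ 4) by (unfold Rr; apply R_bound).
    rewrite !Rabs_mult, (Rabs_right (e n)) by lra.
    assert (0 <= Rabs (c n)) by apply Rabs_pos.
    assert (0 <= Rabs (Rr n)) by apply Rabs_pos.
    replace (h ^ 4 * (kk n ^ 4 * e n * 1)) with (e n * 1 * (kk n * h) ^ 4) by ring.
    apply Rmult_le_compat; try apply Rmult_le_pos; try lra.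
    apply Rmult_le_compat_l; lra. }
  assert (Ex4 : ex_series (fun n => kk n ^ 4 * e n * 1)) by (apply ex_mom; intros; rewrite Rabs_R1; lra).
  assert (Ex2 : ex_series (fun n => e n * c n * Rr n)).
  { apply (exs_dom _ (fun n => h ^ 4 * (kk n ^ 4 * e n * 1))); auto. apply exs_scal; auto. }
  assert (Eq : Series (tterm a (th + h)) + Series (tterm a (th - h)) - 2 * Series (tterm a th)
               = - h ^ 2 * Dser th + 2 * Series (fun n => e n * c n * Rr n)).
  { rewrite <- Series_scal_l.
    rewrite <- Series_plus by (apply ex_series_tterm; auto).
    rewrite <- Series_minus.
    2: apply exs_plus; apply ex_series_tterm; auto.
    2: apply exs_scal, ex_series_tterm; auto.
    unfold Dser. rewrite <- !Series_scal_l, <- Series_plus.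
    2: apply exs_scal; exact Ex1.
    2: apply exs_scal; exact Ex2.
    apply Series_ext. intro n. unfold tterm, Rr, c, e. fold (kk n).
    replace (kk n * (th + h)) with (kk n * th + kk n * h) by ring.
    replace (kk n * (th - h)) with (kk n * th - kk n * h) by ring.
    rewrite cos_plus, cos_minus. field. }
  assert (Bd : Series (fun n => e n * c n * Rr n) <= h ^ 4 * M4).
  { eapply Rle_trans. apply Rle_abs. eapply Rle_trans. apply Series_Rabs.
    apply (exs_dom _ (fun n => h ^ 4 * (kk n ^ 4 * e n * 1))). intro n. rewrite Rabs_Rabsolu. auto.
    apply exs_scal; auto.
    unfold M4. rewrite <- Series_scal_l. apply Series_le. intro n. split. apply Rabs_pos. apply HR.
    apply exs_scal; auto. }
  assert (Hh2 : 0 < h ^ 2) by (apply pow_lt; lra).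
  assert (h ^ 2 * Dser th <= 2 * h ^ 4 * M4) by lra.
  apply (Rmult_le_reg_l (h ^ 2)); auto.
  replace (h ^ 2 * (2 * h ^ 2 * M4)) with (2 * h ^ 4 * M4) by ring. auto.
Qed.

Lemma Dser_nonpos th : PI / 2 < th -> th < PI -> Dser th <= 0.
Proof.
  intros H1 H2.
  destruct (Rle_lt_dec (Dser th) 0) as [H|H]; auto.
  assert (HM := M4_nonneg).
  set (h := Rmin 1 (Rmin (Rmin (th - PI / 2) (PI - th)) (Dser th / (4 * M4 + 1)))).
  assert (Hh0 : 0 < h).
  { unfold h. repeat apply Rmin_glb_lt; try lra. apply Rdiv_lt_0_compat; lra. }
  assert (Hh1 : h <= 1) by apply Rmin_l.
  assert (Hh2 : h <= Rmin (Rmin (th - PI / 2) (PI - th)) (Dser th / (4 * M4 + 1))) by apply Rmin_r.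
  assert (Hh3 : h <= th - PI / 2) by (eapply Rle_trans; [exact Hh2|]; eapply Rle_trans; [apply Rmin_l| apply Rmin_l]).
  assert (Hh4 : h <= PI - th) by (eapply Rle_trans; [exact Hh2|]; eapply Rle_trans; [apply Rmin_l| apply Rmin_r]).
  assert (Hh5 : h <= Dser th / (4 * M4 + 1)) by (eapply Rle_trans; [exact Hh2| apply Rmin_r]).
  assert (K := Dser_key th h Hh0 ltac:(lra) ltac:(lra)).
  assert (h ^ 2 <= h) by (simpl; nra).
  assert (2 * h ^ 2 * M4 <= 2 * h * M4) by (apply Rmult_le_compat_r; lra).
  assert (h * (4 * M4 + 1) <= Dser th).
  { apply (Rmult_le_compat_r (4 * M4 + 1)) in Hh5; [|lra].
    unfold Rdiv in Hh5. rewrite Rmult_assoc, Rinv_l in Hh5 by lra. lra. }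
  nra.
Qed.

End D.


Lemma tail_bound (f b : nat -> R) N : (forall n, Rabs (f n) <= b n) -> ex_series b ->
  Rabs (Series f - fsum f N) <= Series b - fsum b N.
Proof.
  revert f b. induction N as [|N IH]; intros f b Hfb Hb.
  - simpl. rewrite !Rminus_0_r. eapply Rle_trans. apply Series_Rabs.
    apply (exs_dom _ b); auto. intro n; rewrite Rabs_Rabsolu; auto.
    apply Series_le; auto. intro n; split; auto. apply Rabs_pos.
  - assert (Hf : ex_series f) by (apply (exs_dom _ b); auto).
    rewrite !fsum_front. rewrite (Series_incr_1 f Hf), (Series_incr_1 b Hb).
    replace (f 0%nat + Series (fun k => f (S k)) - (f 0%nat + fsum (fun j => f (S j)) N))
      with (Series (fun k => f (S k)) - fsum (fun j => f (S j)) N) by ring.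
    replace (b 0%nat + Series (fun k => b (S k)) - (b 0%nat + fsum (fun j => b (S j)) N))
      with (Series (fun k => b (S k)) - fsum (fun j => b (S j)) N) by ring.
    apply IH; auto. apply (proj1 (ex_series_incr_1 b)); auto.
Qed.

Lemma fsum_lim (f : nat -> R) : ex_series f -> is_lim_seq (fun N => fsum f N) (Series f).
Proof.
  intros H. apply is_lim_seq_incr_1.
  eapply is_lim_seq_ext. intro n. symmetry. apply fsum_sum_n.
  apply (Series_correct _ H).
Qed.

Lemma tail_lim (f : nat -> R) : ex_series f -> is_lim_seq (fun N => Series f - fsum f N) 0.
Proof.
  intros H. replace 0 with (Series f - Series f) by ring.
  apply is_lim_seq_minus'. apply is_lim_seq_const. apply fsum_lim; auto.
Qed.

Lemma term_derive (k th a : R) :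
  is_derive (fun a => exp (- a * k ^ 2) * cos (k * th)) a (- (k ^ 2 * exp (- a * k ^ 2) * cos (k * th))).
Proof. auto_derive; auto. replace (k * (k * 1)) with (k ^ 2) by ring. ring. Qed.

Lemma fsum_derive (th : R) N a :
  is_derive (fun a => fsum (tterm a th) N) a (fsum (fun n => - (kk n ^ 2 * exp (- a * kk n ^ 2) * cos (kk n * th))) N).
Proof.
  induction N as [|N IH]; simpl.
  - apply (is_derive_const 0).
  - apply (is_derive_plus (fun a => fsum (tterm a th) N) (fun a => tterm a th N)); auto.
    unfold tterm, kk. apply term_derive.
Qed.

Lemma tA_mono_a th a1 a2 : PI / 2 < th -> th < PI -> 0 < a1 -> a1 <= a2 -> tA a1 th <= tA a2 th.
Proof.
  intros H1 H2 Ha1 H12.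
  set (b := fun n => kk n ^ 2 * exp (- a1 * kk n ^ 2) * 1).
  assert (Hb : ex_series b) by (apply ex_mom; auto; intros; rewrite Rabs_R1; lra).
  set (T := fun N => Series b - fsum b N).
  assert (Step : forall N, fsum (tterm a2 th) N - fsum (tterm a1 th) N >= - (T N * (a2 - a1))).
  { intro N.
    destruct (MVT_gen (fun a => fsum (tterm a th) N) a1 a2
      (fun a => fsum (fun n => - (kk n ^ 2 * exp (- a * kk n ^ 2) * cos (kk n * th))) N)) as [xi [Hxi Eq]].
    - intros; apply fsum_derive.
    - intros x _. apply continuity_pt_filterlim. apply (ex_derive_continuous (fun a => fsum (tterm a th) N)). eexists. apply fsum_derive.
    - rewrite Rmin_left, Rmax_right in Hxi by lra.
      rewrite Eq.
      set (g := fun n => kk n ^ 2 * exp (- xi * kk n ^ 2) * cos (kk n * th)).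
      assert (Eg : fsum (fun n => - (kk n ^ 2 * exp (- xi * kk n ^ 2) * cos (kk n * th))) N = - fsum g N).
      { replace (- fsum g N) with (-1 * fsum g N) by ring. rewrite <- fsum_scal.
        apply fsum_ext; intros; unfold g; ring. }
      rewrite Eg.
      assert (Hgb : forall n, Rabs (g n) <= b n).
      { intro n. unfold g, b. rewrite !Rabs_mult, Rmult_1_r.
        rewrite (Rabs_right (kk n ^ 2)) by (apply Rle_ge, pow_le, pos_INR).
        rewrite (Rabs_right (exp _)) by (left; apply exp_pos).
        assert (0 <= kk n ^ 2) by (apply pow_le, pos_INR).
        assert (exp (- xi * kk n ^ 2) <= exp (- a1 * kk n ^ 2)) by (apply exp_mono; nra).
        assert (Rabs (cos (kk n * th)) <= 1) by (apply Rabs_le, COS_bound).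
        assert (0 < exp (- xi * kk n ^ 2)) by apply exp_pos.
        apply Rle_trans with (kk n ^ 2 * exp (- xi * kk n ^ 2) * 1).
        apply Rmult_le_compat_l; [apply Rmult_le_pos; lra| lra].
        rewrite Rmult_1_r. apply Rmult_le_compat_l; lra. }
      assert (TB := tail_bound g b N Hgb Hb).
      assert (DN := Dser_nonpos xi ltac:(lra) th H1 H2).
      unfold Dser in DN. fold g in DN.
      apply Rabs_le_between in TB.
      fold (T N) in TB.
      assert (fsum g N <= T N) by lra.
      assert (0 <= a2 - a1) by lra.
      assert (fsum g N * (a2 - a1) <= T N * (a2 - a1)) by (apply Rmult_le_compat_r; lra).
      lra. }
  unfold tA. cut (0 <= Series (tterm a2 th) - Series (tterm a1 th)). lra.
  set (v := fun N => (Series (tterm a2 th) - fsum (tterm a2 th) N) - (Series (tterm a1 th) - fsum (tterm a1 th) N)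
                      - T N * (a2 - a1)).
  assert (Lv : is_lim_seq v 0).
  { replace 0 with (0 - 0 - 0 * (a2 - a1)) by ring.
    apply is_lim_seq_minus'. apply is_lim_seq_minus'; apply tail_lim, ex_series_tterm; lra.
    apply is_lim_seq_mult'. apply tail_lim; auto. apply is_lim_seq_const. }
  assert (H := is_lim_seq_le v (fun _ => Series (tterm a2 th) - Series (tterm a1 th)) 0 _
                 ltac:(intro N; unfold v; specialize (Step N); lra) Lv (is_lim_seq_const _)).
  simpl in H. exact H.
Qed.


Lemma theta_fun_tA alpha y : y <> 0 ->
  theta_fun alpha y = tA (PI * alpha / y) (2 * PI * (1 / 2 - 1 / (8 * y ^ 2))).
Proof.
  intros Hy. unfold theta_fun, tA. f_equal. f_equal.
  apply Series_ext. intro n. unfold theta_term, tterm. f_equal. f_equal. ring.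
Qed.

Theorem mainTheorem14 (alpha : R) (Halpha : 0 < alpha) :
  forall y1 y2 : R,
    sqrt 3 / 2 <= y1 -> y1 <= y2 ->
    theta_fun alpha y2 <= theta_fun alpha y1.
Proof.
  intros y1 y2 H1 H12.
  assert (Hs : 0 < sqrt 3) by (apply sqrt_lt_R0; lra).
  assert (Hs2 : sqrt 3 * sqrt 3 = 3) by (apply sqrt_sqrt; lra).
  assert (Hy1 : 0 < y1) by lra.
  assert (Hy2 : 0 < y2) by lra.
  assert (Hy1s : 3 / 4 <= y1 ^ 2) by nra.
  assert (Hy12 : y1 ^ 2 <= y2 ^ 2) by nra.
  assert (HPI := PI_RGT_0).
  rewrite !theta_fun_tA by lra.
  set (t1 := 2 * PI * (1 / 2 - 1 / (8 * y1 ^ 2))).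
  set (t2 := 2 * PI * (1 / 2 - 1 / (8 * y2 ^ 2))).
  set (a1 := PI * alpha / y1). set (a2 := PI * alpha / y2).
  assert (Ha2 : 0 < a2) by (unfold a2; apply Rdiv_lt_0_compat; [apply Rmult_lt_0_compat|]; lra).
  assert (Ha12 : a2 <= a1).
  { unfold a1, a2. unfold Rdiv. apply Rmult_le_compat_l. apply Rmult_le_pos; lra.
    apply Rinv_le_contravar; lra. }
  assert (Hi1 : 1 / (8 * y1 ^ 2) <= 1 / 6).
  { apply Rmult_le_reg_r with (8 * y1 ^ 2). lra. field_simplify; lra. }
  assert (Hi12 : 1 / (8 * y2 ^ 2) <= 1 / (8 * y1 ^ 2)).
  { unfold Rdiv. rewrite !Rmult_1_l. apply Rinv_le_contravar; lra. }
  assert (Hi2 : 0 < 1 / (8 * y2 ^ 2)) by (apply Rdiv_lt_0_compat; nra).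
  assert (Hi1' : 0 < 1 / (8 * y1 ^ 2)) by (apply Rdiv_lt_0_compat; nra).
  assert (T1a : PI / 2 < t1) by (unfold t1; nra).
  assert (T1b : t1 < PI) by (unfold t1; nra).
  assert (T12 : t1 <= t2) by (unfold t1, t2; nra).
  assert (T2b : t2 <= PI) by (unfold t2; nra).
  apply Rle_trans with (tA a2 t1).
  - apply tA_decr; auto; lra.
  - apply tA_mono_a; auto.
Qed.
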